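(* Let $\mathcal H$ be finite-dimensional, $I\subseteq\mathbb R$ an open interval, and for $j=1,\dots,n$ let $\{\rho_{j,\theta}\}_{\theta\in I}$ be differentiable families of positive definite density matrices on $\mathcal H$. Let $\varrho_\theta=\rho_{1,\theta}\otimes\cdots\otimes\rho_{n,\theta}$ on $\mathfrak H=\mathcal H^{\otimes n}$ and let $\Theta$ be a self-adjoint operator on $\mathfrak H$, independent of $\theta$, which is an unbiased estimator: $\operatorname{Tr}(\varrho_\theta\Theta)=\theta$ for all $\theta\in I$. Then $$\operatorname{Var}_\theta(\Theta):=\operatorname{Tr}\bigl(\varrho_\theta(\Theta-\theta)^2\bigr)\ \ge\ \frac{1}{\sum_{j=1}^n\widetilde{\mathbf I}_j(\theta)},$$ where $\widetilde{\mathbf I}_j(\theta)=\operatorname{Tr}(\rho_{j,\theta}\widetilde H_j(\theta)^2)$ and $\widetilde H_j(\theta)=\frac12(\rho_{j,\theta}^{-1}\rho_{j,\theta}'+\rho_{j,\theta}'\rho_{j,\theta}^{-1})$. Moreover $\sum_j\widetilde{\mathbf I}_j(\theta)=\operatorname{Tr}(\varrho_\theta\widetilde{\mathbf H}(\theta)^2)$ with $\widetilde{\mathbf H}=\sum_j I^{\otimes(j-1)}\otimes\widetilde H_j\otimes I^{\otimes(n-j)}$. In particular, for $n=1$, $\operatorname{Var}_\theta(\Theta)\ge1/\widetilde{\mathbf I}(\theta)$, and if all $\rho_{j,\theta}=\rho_\theta$ then $\operatorname{Var}_\theta(\Theta)\ge1/(n\widetilde{\mathbf I}(\theta))$. *)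

(* Defs.v *)
From HB Require Import structures.
From mathcomp Require Import all_boot all_order all_algebra.
From mathcomp Require Import all_classical all_reals all_analysis.
From mathcomp Require Import complex.
Set Implicit Arguments. Unset Strict Implicit. Unset Printing Implicit Defensive.
Import Order.TTheory GRing.Theory Num.Theory.
Import numFieldNormedType.Exports.
Local Open Scope ring_scope.
Local Open Scope complex_scope.

Section Defs.
Variable R : realType.
Local Notation C := R[i].

Definition adjmx {m n : nat} (A : 'M[C]_(m, n)) : 'M[C]_(n, m) :=
  (map_mx (@conjc R) A)^T.

Definition selfadjoint {d : nat} (A : 'M[C]_d) : Prop := adjmx A = A.

Definition posdef {d : nat} (A : 'M[C]_d) : Prop :=
  selfadjoint A /\
  forall v : 'cV[C]_d, v != 0 -> 0 < (adjmx v *m A *m v) 0 0.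

Definition posdef_density {d : nat} (A : 'M[C]_d) : Prop :=
  posdef A /\ \tr A = 1.

Definition mx_derivable {d : nat} (f : R -> 'M[C]_d) (t : R) : Prop :=
  forall i j, derivable (fun s => complex.Re (f s i j)) t 1 /\
              derivable (fun s => complex.Im (f s i j)) t 1.

Definition mx_derive {d : nat} (f : R -> 'M[C]_d) (t : R) : 'M[C]_d :=
  \matrix_(i, j) Complex (derive1 (fun s => complex.Re (f s i j)) t)
                         (derive1 (fun s => complex.Im (f s i j)) t).

Definition Htilde {d : nat} (rho : R -> 'M[C]_d) (t : R) : 'M[C]_d :=
  (2%:R)^-1 *: (invmx (rho t) *m mx_derive rho t + mx_derive rho t *m invmx (rho t)).

Definition Itilde {d : nat} (rho : R -> 'M[C]_d) (t : R) : C :=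
  \tr (rho t *m (Htilde rho t *m Htilde rho t)).

(* The n-fold tensor product space H^{\otimes n} has the orthonormal basis
   indexed by multi-indices x : 'I_n -> 'I_d; we index it by the finite type
   mindex n d, and matrices on it are 'M_(tdim n d) with tdim n d = d^n. *)
Definition mindex (n d : nat) := {ffun 'I_n -> 'I_d}.
Definition tdim (n d : nat) := #|{: mindex n d}|.

Definition tensprod {n d : nat} (rho : 'I_n -> 'M[C]_d) : 'M[C]_(tdim n d) :=
  \matrix_(a, b) \prod_(k < n)
      rho k ((enum_val a : mindex n d) k) ((enum_val b : mindex n d) k).

Definition embed_at {n d : nat} (j : 'I_n) (A : 'M[C]_d) : 'M[C]_(tdim n d) :=
  \matrix_(a, b)
    (A ((enum_val a : mindex n d) j) ((enum_val b : mindex n d) j) *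
     \prod_(k < n | k != j)
        ((((enum_val a : mindex n d) k) == ((enum_val b : mindex n d) k))%:R)).

End Defs.

(* Main.v *)
Require Import Defs.
From HB Require Import structures.
From mathcomp Require Import all_boot all_order all_algebra.
From mathcomp Require Import all_classical all_reals all_analysis.
From mathcomp Require Import complex.
From mathcomp Require Import ring lra.
From mathcomp Require Import spectral.
Import Order.TTheory GRing.Theory Num.Theory.
Import numFieldNormedType.Exports.
Local Open Scope ring_scope.
Local Open Scope complex_scope.
Set Implicit Arguments. Unset Strict Implicit. Unset Printing Implicit Defensive.

Section Tens.
Variable R : realType.
Local Notation C := R[i].
Variables n d : nat.
Local Notation N := (tdim n d).
Local Notation idx a := (enum_val a : mindex n d).

Lemma sum_idx (F : mindex n d -> C) :
  \sum_(b : 'I_N) F (idx b) = \sum_(x : mindex n d) F x.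
Proof.
symmetry; apply: (reindex (fun b : 'I_N => idx b)).
by exists enum_rank => x _; [exact: enum_valK | exact: enum_rankK].
Qed.

Lemma tensM (A B : 'I_n -> 'M[C]_d) :
  tensprod A *m tensprod B = tensprod (fun k => A k *m B k).
Proof.
apply/matrixP => a c; rewrite !mxE.
rewrite (eq_bigr (fun b => \prod_(k < n) (A k (idx a k) (idx b k) * B k (idx b k) (idx c k)))); last first.
  by move=> b _; rewrite !mxE big_split.
rewrite (sum_idx (fun y => \prod_(k < n) (A k (idx a k) (y k) * B k (y k) (idx c k)))).
transitivity (\prod_(k<n) \sum_(i < d) A k (idx a k) i * B k i (idx c k)); last first.
  by apply: eq_bigr => k _; rewrite mxE.
by rewrite bigA_distr_bigA.
Qed.

Lemma tens1 : tensprod (fun _ : 'I_n => (1%:M : 'M[C]_d)) = 1%:M.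
Proof.
apply/matrixP => a b; rewrite !mxE.
have [<-|ne] := eqVneq a b.
  by apply: big1 => k _; rewrite mxE eqxx.
have [k hk] : exists k, idx a k != idx b k.
  apply/existsP; apply: contraR ne => /existsPn h.
  apply/eqP/enum_val_inj/ffunP => k; by apply/eqP/negPn/h.
by rewrite (bigD1 k) //= mxE (negbTE hk) mul0r.
Qed.

Lemma tr_tens (A : 'I_n -> 'M[C]_d) : \tr (tensprod A) = \prod_(k < n) \tr (A k).
Proof.
rewrite /mxtrace (eq_bigr (fun a => \prod_(k < n) A k (idx a k) (idx a k))); last by move=> a _; rewrite mxE.
rewrite (sum_idx (fun y => \prod_(k < n) A k (y k) (y k))).
by rewrite bigA_distr_bigA.
Qed.

Lemma adj_tens (A : 'I_n -> 'M[C]_d) : adjmx (tensprod A) = tensprod (fun k => adjmx (A k)).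
Proof.
apply/matrixP => a b; rewrite !mxE rmorph_prod; apply: eq_bigr => k _.
by rewrite !mxE.
Qed.

Lemma embed_tens (j : 'I_n) (A : 'M[C]_d) :
  embed_at j A = tensprod (fun k => if k == j then A else 1%:M).
Proof.
apply/matrixP => a b; rewrite !mxE [RHS](bigD1 j) //= eqxx; congr (_ * _).
by apply: eq_bigr => k kj; rewrite (negbTE kj) mxE.
Qed.
End Tens.

Section CDer.
Variable R : realType.
Local Notation C := R[i].

Definition cdr (g : R -> C) (t : R) (dg : C) :=
  is_derive t (1:R) (fun s => complex.Re (g s)) (complex.Re dg) /\
  is_derive t (1:R) (fun s => complex.Im (g s)) (complex.Im dg).

Lemma ReD (x y : C) : complex.Re (x + y) = complex.Re x + complex.Re y. Proof. by case: x; case: y. Qed.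
Lemma ImD (x y : C) : complex.Im (x + y) = complex.Im x + complex.Im y. Proof. by case: x; case: y. Qed.
Lemma ReM (x y : C) : complex.Re (x * y) = complex.Re x * complex.Re y - complex.Im x * complex.Im y. Proof. by case: x; case: y. Qed.
Lemma ImM (x y : C) : complex.Im (x * y) = complex.Re x * complex.Im y + complex.Im x * complex.Re y. Proof. by case: x; case: y. Qed.

Lemma der_mul (f g : R -> R) t df dg : is_derive t (1:R) f df -> is_derive t 1 g dg ->
  is_derive t (1:R) (fun s => f s * g s) (f t * dg + g t * df).
Proof. move=> H1 H2; exact: (@is_deriveM R R f g t 1 df dg H1 H2). Qed.

Lemma der_add (f g : R -> R) t df dg : is_derive t (1:R) f df -> is_derive t 1 g dg ->
  is_derive t (1:R) (fun s => f s + g s) (df + dg).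
Proof. move=> H1 H2; exact: (@is_deriveD R R R f g t 1 df dg H1 H2). Qed.

Lemma der_sub (f g : R -> R) t df dg : is_derive t (1:R) f df -> is_derive t 1 g dg ->
  is_derive t (1:R) (fun s => f s - g s) (df - dg).
Proof. move=> H1 H2; exact: (@is_deriveB R R R f g t 1 df dg H1 H2). Qed.

Lemma der_ext (f g : R -> R) t df : (forall s, f s = g s) -> is_derive t (1:R) f df -> is_derive t 1 g df.
Proof. by move=> /funext ->. Qed.

Lemma cdr_ext g h t dg : (forall s, g s = h s) -> cdr g t dg -> cdr h t dg.
Proof. by move=> /funext ->. Qed.

Lemma cdr_cst (c : C) t : cdr (fun _ => c) t 0.
Proof. by split; apply: is_derive_cst. Qed.

Lemma cdr_add g h t a b : cdr g t a -> cdr h t b -> cdr (fun s => g s + h s) t (a + b).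
Proof.
move=> [g1 g2] [h1 h2]; split.
  rewrite ReD; have K := der_add g1 h1; apply: der_ext K => s. by rewrite ReD.
by rewrite ImD; apply: der_ext (der_add g2 h2) => s; rewrite ImD.
Qed.

Lemma cdr_mul g h t a b : cdr g t a -> cdr h t b ->
  cdr (fun s => g s * h s) t (a * h t + g t * b).
Proof.
move=> [g1 g2] [h1 h2]; split.
  have := der_sub (der_mul g1 h1) (der_mul g2 h2).
  move=> H; apply: der_ext (is_derive_eq H _) => [s|]; first by rewrite ReM.
  rewrite ReD !ReM; ring.
have := der_add (der_mul g1 h2) (der_mul g2 h1).
move=> H; apply: der_ext (is_derive_eq H _) => [s|]; first by rewrite ImM.
rewrite ImD !ImM; ring.
Qed.

Lemma cdr_sum (I : Type) (r : seq I) (F : I -> R -> C) dF t :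
  (forall i, cdr (F i) t (dF i)) ->
  cdr (fun s => \sum_(i <- r) F i s) t (\sum_(i <- r) dF i).
Proof.
move=> H; elim: r => [|x r IH].
  by rewrite big_nil; apply: cdr_ext (cdr_cst 0 t) => s; rewrite big_nil.
rewrite big_cons; apply: cdr_ext (cdr_add (H x) IH) => s; by rewrite big_cons.
Qed.

Lemma cdr_prod (I : eqType) (r : seq I) (F : I -> R -> C) dF t :
  uniq r -> (forall i, cdr (F i) t (dF i)) ->
  cdr (fun s => \prod_(i <- r) F i s) t
      (\sum_(j <- r) \prod_(i <- r) (if i == j then dF i else F i t)).
Proof.
move=> + H; elim: r => [|x r IH] /=.
  by move=> _; rewrite big_nil; apply: cdr_ext (cdr_cst 1 t) => s; rewrite big_nil.
case/andP=> xr ur; have := cdr_mul (H x) (IH ur).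
move=> H2; apply: cdr_ext (eq_ind _ (cdr _ t) H2 _ _) => [s|]; first by rewrite big_cons.
rewrite big_cons [in RHS]big_cons eqxx; congr (_ * _ + _).
  rewrite !big_seq; apply: eq_bigr => i ir.
  by have -> : (i == x) = false by apply/negbTE; apply: contraNneq xr => <-.
rewrite mulr_sumr [LHS]big_seq [RHS]big_seq; apply: eq_bigr => j jr.
rewrite big_cons; have -> : (x == j) = false by apply/negbTE; apply: contraNneq xr => ->.
done.
Qed.

Lemma cdr_near g h t dg : (\forall s \near t, g s = h s) -> cdr g t dg -> cdr h t dg.
Proof.
move=> E [H1 H2]; split.
  by apply: near_eq_is_derive H1; near=> s; rewrite (near E s).
by apply: near_eq_is_derive H2; near=> s; rewrite (near E s).
Unshelve. all: by end_near.
Qed.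

Lemma cdr_unique g t a b : cdr g t a -> cdr g t b -> a = b.
Proof.
case: a => a1 a2; case: b => b1 b2 [[_ Ha1] [_ Ha2]] [[_ Hb1] [_ Hb2]] /=.
by move: Ha1 Ha2 Hb1 Hb2 => /= -> -> <- <-.
Qed.

Lemma cdr_entry d (f : R -> 'M[C]_d) t i j : mx_derivable f t ->
  cdr (fun s => f s i j) t (mx_derive f t i j).
Proof.
move=> /(_ i j) [H1 H2]; rewrite /mx_derive mxE; split => /=; rewrite derive1E;
  exact: derivableP.
Qed.

End CDer.

Section D.
Variable R : realType.
Local Notation C := R[i].
Variables n d : nat.
Local Notation N := (tdim n d).
Local Notation idx a := (enum_val a : mindex n d).

Definition Dtens (rho : 'I_n -> R -> 'M[C]_d) t : 'M[C]_N :=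
  \sum_(j < n) tensprod (fun k => if k == j then mx_derive (rho k) t else rho k t).

Lemma cdr_trtens (rho : 'I_n -> R -> 'M[C]_d) t (M : 'M[C]_N) :
  (forall k, mx_derivable (rho k) t) ->
  cdr (fun s => \tr (tensprod (fun k => rho k s) *m M)) t (\tr (Dtens rho t *m M)).
Proof.
move=> Hd.
have E : forall s, \tr (tensprod (fun k => rho k s) *m M) =
   \sum_(a : 'I_N) \sum_(b : 'I_N) (\prod_(k <- index_enum 'I_n) rho k s (idx a k) (idx b k)) * M b a.
  by move=> s; rewrite /mxtrace; apply: eq_bigr => a _; rewrite !mxE; apply: eq_bigr => b _; rewrite !mxE.
apply: cdr_ext (fun s => esym (E s)) _.
have -> : \tr (Dtens rho t *m M) = \sum_(a : 'I_N) \sum_(b : 'I_N)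
   ((\sum_(j <- index_enum 'I_n) \prod_(k <- index_enum 'I_n)
      (if k == j then mx_derive (rho k) t (idx a k) (idx b k) else rho k t (idx a k) (idx b k))) * M b a
    + (\prod_(k <- index_enum 'I_n) rho k t (idx a k) (idx b k)) * 0).
  rewrite /mxtrace; apply: eq_bigr => a _; rewrite !mxE; apply: eq_bigr => b _.
  rewrite mulr0 addr0 /Dtens summxE [LHS]mulr_suml [RHS]mulr_suml; apply: eq_bigr => j _; rewrite !mxE.
  congr (_ * _); apply: eq_bigr => k _; by case: (k == j).
apply: cdr_sum => a; apply: cdr_sum => b; apply: cdr_mul; last exact: cdr_cst.
apply: cdr_prod; first exact: index_enum_uniq.
by move=> k; apply: cdr_entry.
Qed.
End D.

Section Adj.
Variable R : realType.
Local Notation C := R[i].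

Lemma adjmxM m k p (A : 'M[C]_(m,k)) (B : 'M[C]_(k,p)) : adjmx (A *m B) = adjmx B *m adjmx A.
Proof. by rewrite /adjmx map_mxM trmx_mul. Qed.
Lemma adjmxK m k (A : 'M[C]_(m,k)) : adjmx (adjmx A) = A.
Proof.
rewrite /adjmx map_trmx trmxK -map_mx_comp; apply/matrixP => i j; rewrite !mxE /=.
exact: conjcK.
Qed.
Lemma adjmxD m k (A B : 'M[C]_(m,k)) : adjmx (A + B) = adjmx A + adjmx B.
Proof. by rewrite /adjmx map_mxD linearD. Qed.
Lemma adjmxN m k (A : 'M[C]_(m,k)) : adjmx (- A) = - adjmx A.
Proof. by rewrite /adjmx map_mxN linearN. Qed.
Lemma adjmxZ m k (c : C) (A : 'M[C]_(m,k)) : adjmx (c *: A) = conjc c *: adjmx A.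
Proof. by rewrite /adjmx map_mxZ linearZ. Qed.
Lemma adjmx_scalar k (c : C) : adjmx (c%:M : 'M[C]_k) = (conjc c)%:M.
Proof. apply/matrixP => i j; rewrite !mxE eq_sym; case: (i == j); by rewrite ?mulr1n ?mulr0n ?rmorph0. Qed.
Lemma adjmx1 k : adjmx (1%:M : 'M[C]_k) = 1%:M.
Proof. by rewrite adjmx_scalar rmorph1. Qed.
Lemma tr_adjmx k (A : 'M[C]_k) : \tr (adjmx A) = conjc (\tr A).
Proof. by rewrite /adjmx mxtrace_tr /mxtrace rmorph_sum; apply: eq_bigr => i _; rewrite mxE. Qed.
Lemma adjmx_sum k I (r : seq I) (F : I -> 'M[C]_k) : adjmx (\sum_(i <- r) F i) = \sum_(i <- r) adjmx (F i).
Proof.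
elim: r => [|x r IH]; first by rewrite !big_nil /adjmx map_mx0 trmx0.
by rewrite !big_cons adjmxD IH.
Qed.
Lemma tr_adj_ge0 m k (M : 'M[C]_(m,k)) : 0 <= \tr (adjmx M *m M).
Proof.
rewrite /mxtrace; apply: sumr_ge0 => i _; rewrite mxE; apply: sumr_ge0 => j _.
rewrite !mxE mulrC; exact: mul_conjC_ge0.
Qed.
Local Open Scope sesquilinear_scope.
Lemma adj_ttrans k (A : 'M[C]_k) : A ^t* = adjmx A.
Proof. by rewrite /adjmx map_trmx. Qed.
End Adj.

Section PD.
Variable R : realType.
Local Notation C := R[i].
Local Open Scope sesquilinear_scope.

Lemma posdef_unit k (A : 'M[C]_k) : posdef A -> A \in unitmx.
Proof.
move=> [Hsa Hpos]; rewrite -row_free_unit -kermx_eq0.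
apply/eqP/row_matrixP => i; rewrite row0.
set u := row i (kermx A).
have uA : u *m A = 0 by rewrite /u -row_mul mulmx_ker row0.
have Av : A *m adjmx u = 0 by rewrite -{1}Hsa -adjmxM uA /adjmx map_mx0 trmx0.
apply/eqP; apply: contraT => un0.
have vn0 : adjmx u != 0.
  apply: contra un0 => /eqP h; by rewrite -(adjmxK u) h /adjmx map_mx0 trmx0.
have := Hpos _ vn0; by rewrite -mulmxA Av mulmx0 mxE ltxx.
Qed.

Lemma posdef_sqrt k (A : 'M[C]_k) : posdef A -> exists S : 'M[C]_k, A = adjmx S *m S.
Proof.
move=> [Hsa Hpos].
have N : A \is normalmx by apply/normalmxP; rewrite adj_ttrans Hsa.
have /orthomx_spectralP E := N.
have Uu := spectral_unitarymx A.
have UU := unitarymxP Uu.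
rewrite invmx_unitary // in E.
set U := spectralmx A in E Uu UU; set p := spectral_diag A in E.
have pos : forall i, 0 < p 0 i.
  move=> i; set e := (delta_mx i 0 : 'cV[C]_k).
  have en0 : e != 0.
    apply/eqP => /matrixP /(_ i 0); rewrite !mxE !eqxx /= => /eqP; by rewrite oner_eq0.
  set v := U^t* *m e.
  have vn0 : v != 0.
    apply: contra en0 => /eqP h; by rewrite -(mul1mx e) -UU -mulmxA -/v h mulmx0.
  have := Hpos _ vn0.
  have -> : adjmx v *m A *m v = adjmx e *m diag_mx p *m e.
    rewrite /v adjmxM adj_ttrans adjmxK E.
    rewrite !mulmxA -[adjmx e *m U *m U^t*]mulmxA UU mulmx1.
    by rewrite -[_ *m U *m adjmx U]mulmxA -adj_ttrans UU mulmx1.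
  have -> : adjmx e = delta_mx 0 i.
    by apply/matrixP => a b; rewrite !mxE rmorph_nat andbC.
  by rewrite -rowE -colE !mxE eqxx mulr1n.
set q := \row_j sqrtC (p 0 j).
exists (diag_mx q *m U).
have Hq : adjmx (diag_mx q) = diag_mx q.
  rewrite /adjmx map_diag_mx tr_diag_mx; congr diag_mx; apply/rowP => j; rewrite !mxE.
  apply: geC0_conj; rewrite sqrtC_ge0; exact: ltW.
rewrite adjmxM Hq -adj_ttrans mulmxA -[U^t* *m _ *m _]mulmxA mulmx_diag.
rewrite [LHS]E; congr (_ *m diag_mx _ *m _); apply/rowP => j; rewrite !mxE.
by rewrite -expr2 sqrtCK.
Qed.
End PD.

Section More.
Variable R : realType.
Local Notation C := R[i].

Lemma cdr_conj (g : R -> C) (t : R) (dg : C) : cdr g t dg -> cdr (fun s => conjc (g s)) t (conjc dg).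
Proof.
case: dg => a b [H1 H2]; split.
  by apply: der_ext H1 => s; case: (g s).
have H3 := @is_deriveN R R R _ t 1 _ H2.
apply: der_ext H3 => s; change (- complex.Im (g s) = complex.Im (conjc (g s))); by case: (g s).
Qed.

Lemma sa_derive k (f : R -> 'M[C]_k) (I : set R) t : open I -> I t ->
  (forall s, I s -> selfadjoint (f s)) -> mx_derivable f t -> selfadjoint (mx_derive f t).
Proof.
move=> oI It Hsa Hd; have nI : \forall s \near t, I s.
  by apply: open_nbhs_nbhs; split.
apply/matrixP => i j.
have -> : adjmx (mx_derive f t) i j = conjc (mx_derive f t j i) by rewrite !mxE.
apply: (cdr_unique (g := fun s => f s i j)).
  apply: cdr_near (cdr_conj (cdr_entry j i Hd)).
  near=> s; have Is : I s by near: s; exact: nI.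
  have := Hsa s Is => /matrixP /(_ i j).
  by rewrite !mxE.
exact: cdr_entry.
Unshelve. all: by end_near.
Qed.

Lemma cdr_tr k (f : R -> 'M[C]_k) t : mx_derivable f t ->
  cdr (fun s => \tr (f s)) t (\tr (mx_derive f t)).
Proof. by move=> Hd; apply: cdr_sum => i; apply: cdr_entry. Qed.

Lemma cdr_id t : cdr (fun s : R => s%:C) t 1.
Proof. split => /=; [exact: is_derive_id | exact: is_derive_cst]. Qed.

Lemma real_final (v j k : R) : (forall l, 0 <= v - 2 * l + l^+2 * j) -> j <= k -> 0 <= j ->
  ((3 * j+k)/4)^-1 <= v.
Proof.
move=> H jk j0.
have v0 : 0 <= v by have := H 0; rewrite !(mulr0, expr0n, mul0r, subr0, addr0).
have jp : 0 < j.
  rewrite lt_def j0 andbT; apply/eqP => je; have := H (v + 1).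
  rewrite je mulr0 addr0; lra.
have := H j^-1; rewrite expr2 -mulrA mulVf ?gt_eqF // mulr1 => H2.
have Ip : j <= (3 * j+k)/4 by lra.
apply: le_trans (_ : j^-1 <= v).
  by rewrite lef_pV2 ?posrE //; lra.
lra.
Qed.
End More.

Section Form.
Variable R : realType.
Local Notation C := R[i].
Variables (k : nat) (P : 'M[C]_k).
Definition sf (Y Z : 'M[C]_k) := \tr (adjmx Y *m P *m Z).
Lemma sfDl Y1 Y2 Z : sf (Y1 + Y2) Z = sf Y1 Z + sf Y2 Z.
Proof. by rewrite /sf adjmxD !mulmxDl mxtraceD. Qed.
Lemma sfDr Y Z1 Z2 : sf Y (Z1 + Z2) = sf Y Z1 + sf Y Z2.
Proof. by rewrite /sf !mulmxDr mxtraceD. Qed.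
Lemma sfBl Y1 Y2 Z : sf (Y1 - Y2) Z = sf Y1 Z - sf Y2 Z.
Proof. by rewrite /sf adjmxD adjmxN !mulmxDl !mulNmx mxtraceD linearN. Qed.
Lemma sfBr Y Z1 Z2 : sf Y (Z1 - Z2) = sf Y Z1 - sf Y Z2.
Proof. by rewrite /sf !mulmxDr mulmxN mxtraceD linearN. Qed.
Lemma sfZl (c : R) Y Z : sf (c%:C *: Y) Z = c%:C * sf Y Z.
Proof. by rewrite /sf adjmxZ conjc_real -!scalemxAl mxtraceZ. Qed.
Lemma sfZr (c : C) Y Z : sf Y (c *: Z) = c * sf Y Z.
Proof. by rewrite /sf -scalemxAr mxtraceZ. Qed.
End Form.

Section Inv.
Variable R : realType.
Local Notation C := R[i].
Lemma adj_inv_sa k (A : 'M[C]_k) : A \in unitmx -> selfadjoint A -> adjmx (invmx A) = invmx A.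
Proof.
move=> U S.
have h : adjmx (invmx A) *m A = 1%:M by rewrite -{2}S -adjmxM mulmxV // adjmx1.
by rewrite -[LHS]mulmx1 -(mulmxV U) mulmxA h mul1mx.
Qed.

Lemma tens_invl n d (A : 'I_n -> 'M[C]_d) : (forall j, A j \in unitmx) ->
  tensprod (fun j => invmx (A j)) *m tensprod A = 1%:M.
Proof.
move=> U; rewrite tensM -(tens1 R n d); congr tensprod; apply: funext => j.
exact: mulVmx.
Qed.
Lemma tens_invr n d (A : 'I_n -> 'M[C]_d) : (forall j, A j \in unitmx) ->
  tensprod A *m tensprod (fun j => invmx (A j)) = 1%:M.
Proof.
move=> U; rewrite tensM -(tens1 R n d); congr tensprod; apply: funext => j.
exact: mulmxV.
Qed.

Lemma embed_lin n d (j : 'I_n) (c : C) (X Y : 'M[C]_d) :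
  embed_at j (c *: (X + Y)) = c *: (embed_at j X + embed_at j Y).
Proof. apply/matrixP => a b; rewrite !mxE; ring. Qed.
End Inv.

Unset Implicit Arguments. Set Strict Implicit.
Theorem mainTheorem9 (R : realType) (d n : nat) (I : set R)
  (rho : 'I_n -> R -> 'M[R[i]]_d) (Theta : 'M[R[i]]_(tdim n d)) :
  (0 < n)%N ->
  open I -> is_interval I ->
  (forall j t, I t -> posdef_density (rho j t)) ->
  (forall j t, I t -> mx_derivable (rho j) t) ->
  selfadjoint Theta ->
  (forall t, I t -> \tr (tensprod (fun j => rho j t) *m Theta) = t%:C) ->
  forall theta, I theta ->
    let varrho := tensprod (fun j => rho j theta) in
    let Th := Theta - theta%:C%:M in
    (\sum_(j < n) Itilde (rho j) theta)^-1 <= \tr (varrho *m (Th *m Th))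
    /\
    \sum_(j < n) Itilde (rho j) theta =
      \tr (varrho *m ((\sum_(j < n) embed_at j (Htilde (rho j) theta))
                      *m (\sum_(j < n) embed_at j (Htilde (rho j) theta)))).
Proof.
move=> n0 oI iI Hpd Hdv HsaT Hunb theta Ith varrho Th.
have nI : \forall s \near theta, I s by apply: open_nbhs_nbhs; split.
pose r k := rho k theta. pose Dk k := mx_derive (rho k) theta.
have Ur : forall k, r k \in unitmx by move=> k; exact: posdef_unit (Hpd k theta Ith).1.
have Sr : forall k, selfadjoint (r k) by move=> k; exact: (Hpd k theta Ith).1.1.
have SD : forall k, selfadjoint (Dk k).
  by move=> k; apply: (sa_derive oI Ith (fun s Is => (Hpd k s Is).1.1) (Hdv k theta Ith)).
have trDk : forall k, \tr (Dk k) = 0.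
  move=> k; apply: (cdr_unique (cdr_tr (Hdv k theta Ith))).
  apply: cdr_near (cdr_cst 1 theta); near=> s.
  have Is : I s by near: s; exact: nI.
  by rewrite (Hpd k s Is).2.
set D := Dtens rho theta.
have trDT : \tr (D *m Theta) = 1.
  apply: (cdr_unique (cdr_trtens Theta (fun k => Hdv k theta Ith))).
  apply: cdr_near (cdr_id theta); near=> s.
  have Is : I s by near: s; exact: nI.
  by rewrite Hunb.
have trD : \tr D = 0.
  rewrite -[D]mulmx1; apply: (cdr_unique (cdr_trtens 1%:M (fun k => Hdv k theta Ith))).
  apply: cdr_near (cdr_cst 1 theta); near=> s.
  have Is : I s by near: s; exact: nI.
  rewrite mulmx1 tr_tens big1 // => k _; by rewrite (Hpd k s Is).2.
set ri := tensprod (fun k => invmx (r k)).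
have riL : ri *m varrho = 1%:M by exact: tens_invl.
have riR : varrho *m ri = 1%:M by exact: tens_invr.
have Sv : adjmx varrho = varrho.
  by rewrite adj_tens; congr tensprod; apply: funext => k; exact: Sr.
have Sri : adjmx ri = ri.
  by rewrite adj_tens; congr tensprod; apply: funext => k; exact: adj_inv_sa.
have SDt : adjmx D = D.
  rewrite /D /Dtens adjmx_sum; apply: eq_bigr => j _; rewrite adj_tens.
  by congr tensprod; apply: funext => k; case: (k == j); [exact: SD | exact: Sr].
have [T HT] : exists T : 'M[R[i]]_(tdim n d), varrho = adjmx T *m T.
  have HS : forall k, exists S : 'M[R[i]]_d, r k = adjmx S *m S.
    by move=> k; apply: posdef_sqrt; exact: (Hpd k theta Ith).1.
  exists (tensprod (fun k => projT1 (cid (HS k)))).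
  rewrite adj_tens tensM /varrho; congr tensprod; apply: funext => k.
  by case: (cid (HS k)).
have psd : forall Y, 0 <= sf varrho Y Y.
  by move=> Y; rewrite /sf HT !mulmxA -adjmxM -mulmxA; exact: tr_adj_ge0.
have SX : adjmx Th = Th.
  by rewrite /Th adjmxD adjmxN HsaT adjmx_scalar conjc_real.
have trDX : \tr (D *m Th) = 1.
  by rewrite /Th mulmxBr mxtraceD linearN /= trDT mul_mx_scalar mxtraceZ trD mulr0 subr0.
clearbody Th.
set A := ri *m D. set As := D *m ri.
have AsE : adjmx A = As by rewrite adjmxM SDt Sri.
have AE : adjmx As = A by rewrite adjmxM SDt Sri.
set J := \tr (D *m ri *m D). set K := sf varrho As As.
have sXX : sf varrho Th Th = \tr (varrho *m (Th *m Th)).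
  by rewrite /sf SX [in LHS]mxtrace_mulC [in LHS]mulmxA [in LHS]mxtrace_mulC.
have sXA : sf varrho Th A = 1.
  by rewrite /sf SX /A mulmxA -[Th *m varrho *m ri]mulmxA riR mulmx1 mxtrace_mulC trDX.
have sAX : sf varrho A Th = 1.
  by rewrite /sf AsE /As -[D *m ri *m varrho]mulmxA riL mulmx1 trDX.
have sAA : sf varrho A A = J.
  by rewrite /sf AsE /As /A -[D *m ri *m varrho]mulmxA riL mulmx1 mulmxA.
have sAAs : sf varrho A As = J.
  rewrite /sf AsE /As -[D *m ri *m varrho]mulmxA riL mulmx1 /J.
  by rewrite [RHS]mxtrace_mulC mulmxA.
have sAsA : sf varrho As A = J.
  rewrite /sf AE /A -mulmxA (mulmxA varrho) riR mul1mx /J.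
  by rewrite mxtrace_mulC mulmxA.
have KJ : 0 <= K - J.
  by have := psd (A - As); rewrite sfBl !sfBr sAA sAAs sAsA -/K; congr (_ <= _); ring.
have Hl : forall l : R, 0 <= \tr (varrho *m (Th *m Th)) - 2%:R * l%:C + l%:C ^+ 2 * J.
  move=> l; have := psd (Th - l%:C *: A).
  by rewrite sfBl !sfBr !sfZl !sfZr sXX sXA sAX sAA; congr (_ <= _); ring.
have trH : forall j, \tr (r j *m Htilde (rho j) theta) = 0.
  move=> j; rewrite /Htilde -scalemxAr mxtraceZ mulmxDr mxtraceD mulmxA mulmxV ?Ur // mul1mx.
  by rewrite mulmxA mxtrace_mulC mulmxA mulVmx ?Ur // mul1mx trDk addr0 mulr0.
set Htot := \sum_(j < n) embed_at j (Htilde (rho j) theta).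
have Part2 : \sum_(j < n) Itilde (rho j) theta = \tr (varrho *m (Htot *m Htot)).
  rewrite /Htot mulmx_suml mulmx_sumr raddf_sum; apply: eq_bigr => j _.
  rewrite mulmx_sumr mulmx_sumr raddf_sum (bigD1 j) //= big1 ?addr0.
    rewrite !embed_tens !tensM tr_tens (bigD1 j) //= eqxx big1 ?mulr1 //.
    by move=> l lj; rewrite (negbTE lj) !mulmx1 (Hpd l theta Ith).2.
  move=> k kj; rewrite !embed_tens !tensM tr_tens (bigD1 j) //= eqxx.
  have -> : (j == k) = false by rewrite eq_sym; exact: negbTE.
  by rewrite mulmx1 trH mul0r.
have HtotE : Htot = (2%:R)^-1 *: (A + As).
  rewrite /Htot /Htilde; under eq_bigr do rewrite embed_lin.
  rewrite -scaler_sumr big_split /=; congr (_ *: (_ + _)).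
    rewrite /A /D /Dtens mulmx_sumr; apply: eq_bigr => j _; rewrite embed_tens tensM.
    congr tensprod; apply: funext => k; case: eqP => [->|_] //=.
    by rewrite mulVmx ?Ur.
  rewrite /As /D /Dtens mulmx_suml; apply: eq_bigr => j _; rewrite embed_tens tensM.
  congr tensprod; apply: funext => k; case: eqP => [->|_] //=.
  by rewrite mulmxV ?Ur.
have h2 : (2%:R : R[i])^-1 = ((2%:R : R)^-1)%:C by rewrite fmorphV rmorph_nat.
have SH : adjmx Htot = Htot.
  by rewrite HtotE adjmxZ h2 conjc_real adjmxD AsE AE addrC.
have ItE : \tr (varrho *m (Htot *m Htot)) = ((2%:R : R)^-1)%:C * (((2%:R : R)^-1)%:C * (J + J + (J + K))).
  have -> : \tr (varrho *m (Htot *m Htot)) = sf varrho Htot Htot.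
    by rewrite /sf SH [in RHS]mxtrace_mulC [in RHS]mulmxA [in RHS]mxtrace_mulC.
  by rewrite {1 2}HtotE h2 sfZl sfZr sfDl !sfDr sAA sAAs sAsA.
have J0 : 0 <= J by rewrite -sAA psd.
have K0 : 0 <= K by exact: psd.
have V0 : 0 <= \tr (varrho *m (Th *m Th)) by rewrite -sXX psd.
have Jr := RRe_real (ger0_real J0).
have Kr := RRe_real (ger0_real K0).
have Vr := RRe_real (ger0_real V0).
set j := complex.Re J in Jr; set k := complex.Re K in Kr; set v := complex.Re (\tr (varrho *m (Th *m Th))) in Vr.
split; last exact: Part2.
rewrite Part2 ItE -Jr -Kr -Vr.
have E1 : ((2%:R : R)^-1)%:C * (((2%:R : R)^-1)%:C * (j%:C + j%:C + (j%:C + k%:C))) =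
   ((3 * j + k) / 4)%:C.
  have E0 : (3 * j + k) / 4 = (2%:R : R)^-1 * ((2%:R : R)^-1 * (j + j + (j + k))) by field.
  by rewrite E0 !rmorphM !rmorphD.
rewrite E1 -fmorphV lecR; apply: real_final.
- move=> l; have := Hl l; rewrite -Vr -Jr.
  have -> : v%:C - 2%:R * l%:C + l%:C ^+ 2 * j%:C = (v - 2 * l + l ^+ 2 * j)%:C.
    by rewrite !rmorphD ?rmorphN !rmorphM rmorph_nat expr2.
  by rewrite ler0c.
- by move: KJ; rewrite -Kr -Jr -rmorphB ler0c subr_ge0.
- by move: J0; rewrite -Jr ler0c.
Unshelve. all: by end_near.
Qed.
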